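(* In the standard LLP setup, for every $N\ge1$: $L(G,\gamma^{N+1}_{cons})\supseteq L(G,\gamma^N_{cons})$.
   Context: Standard LLP setup. $\Sigma=\Sigma_c\,\dot\cup\,\Sigma_{uc}$ is a finite alphabet partitioned into controllable and uncontrollable events. The plant $G$ has generated language $L(G)$ and marked language $L_m(G)$ with $L(G)=\overline{L_m(G)}$ ($\overline{M}$ = set of prefixes of strings in $M$). The legal language $K\subseteq L_m(G)$ satisfies $K=\overline{K}\cap L_m(G)$. For a prefix-closed $L$, $M$ is controllable w.r.t. $L$ if $\overline{M}\Sigma_{uc}\cap L\subseteq\overline{M}$. For a language $L$ and $s\in\Sigma^*$: $L/s=\{t: st\in L\}$; $L|_N=\{t\in L:|t|\le N\}$; $\Sigma_{L(G)}(s)=\{\sigma\in\Sigma: s\sigma\in L(G)\}$. $M^{\uparrow/s|_N}$ is the supremal sublanguage of $M$ controllable w.r.t. $L(G)/s|_N$. Conservative attitude: $f^N_{cons}(s)=[K/s|_{N-1}]^{\uparrow/s|_N}$; control policy $\gamma^N_{cons}(s)=(\overline{f^N_{cons}(s)}\cap\Sigma)\cup(\Sigma_{uc}\cap\Sigma_{L(G)}(s))$. Closed-loop language $L(G,\gamma)$: $\epsilon\in L(G,\gamma)$, and $s\sigma\in L(G,\gamma)$ iff $s\in L(G,\gamma)$, $s\sigma\in L(G)$, $\sigma\in\gamma(s)$. *)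

(* Defs.v *)
From mathcomp Require Import all_boot.
Set Implicit Arguments. Unset Strict Implicit. Unset Printing Implicit Defensive.

Section LLP.
Variable Sigma : finType.

Definition lang := seq Sigma -> Prop.

Definition pclos (M : lang) : lang := fun t => exists u, M (t ++ u).

Definition subl (M1 M2 : lang) : Prop := forall t, M1 t -> M2 t.

Definition quot (L : lang) (s : seq Sigma) : lang := fun t => L (s ++ t).

Definition trunc (L : lang) (N : nat) : lang := fun t => L t /\ size t <= N.

Definition controllable (uc : pred Sigma) (M L : lang) : Prop :=
  forall t sigma, pclos M t -> uc sigma -> L (rcons t sigma) -> pclos M (rcons t sigma).

Definition supC (uc : pred Sigma) (M L : lang) : lang :=
  fun t => exists M' : lang, subl M' M /\ controllable uc M' L /\ M' t.

Definition LG (Lm : lang) : lang := pclos Lm.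

Definition f_cons (uc : pred Sigma) (Lm K : lang) (N : nat) (s : seq Sigma) : lang :=
  supC uc (trunc (quot K s) N.-1) (trunc (quot (LG Lm) s) N).

Definition gamma_cons (uc : pred Sigma) (Lm K : lang) (N : nat)
  (s : seq Sigma) (sigma : Sigma) : Prop :=
  pclos (f_cons uc Lm K N s) [:: sigma] \/ (uc sigma /\ LG Lm (rcons s sigma)).

Inductive closed_loop (L : lang) (gamma : seq Sigma -> Sigma -> Prop) : lang :=
| cl_nil : closed_loop L gamma [::]
| cl_snoc s sigma : closed_loop L gamma s -> L (rcons s sigma) -> gamma s sigma ->
    closed_loop L gamma (rcons s sigma).

End LLP.

(* Main.v *)
Require Import Defs.
From mathcomp Require Import all_boot.
From mathcomp Require Import zify.

Lemma gamma_mono (Sigma : finType) (uc : pred Sigma) (Lm K : seq Sigma -> Prop)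
  (N : nat) (HN : 1 <= N) s sigma :
  gamma_cons uc Lm K N s sigma -> gamma_cons uc Lm K N.+1 s sigma.
Proof.
case=> [[u [M' [Hsub [Hc HM]]]]|H]; last by right.
left; exists u; exists M'; split; [|split; [|exact HM]].
- move=> t /Hsub [Ht Hsz]; split => //=. lia.
- move=> t a Hp Hu [HL Hsz]; apply: Hc => //; split => //.
  case: Hp => w /Hsub [_ Hw]. rewrite size_cat in Hw.
  rewrite size_rcons. lia.
Qed.

Theorem theorem5 (Sigma : finType) (uc : pred Sigma) (Lm K : seq Sigma -> Prop)
  (HK_sub : forall t, K t -> Lm t)
  (HK_closed : forall t, K t <-> (pclos K t /\ Lm t))
  (N : nat) (HN : 1 <= N) :
  forall s, closed_loop (LG Lm) (gamma_cons uc Lm K N) s ->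
            closed_loop (LG Lm) (gamma_cons uc Lm K N.+1) s.
Proof.
move=> s; elim=> [|t a _ IH HL Hg]; first exact: cl_nil.
apply: cl_snoc => //; exact: gamma_mono.
Qed.
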